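(* Let $\mathbf{Cont}_{0,0}$ be the 1-category whose objects are set-truncated containers and whose morphisms are cartesian morphisms. The functor $(-)\times \mathrm{Id} : \mathbf{Cont}_{0,0}\to\mathbf{Cont}_{0,0}$ is left adjoint to the derivative functor $\partial : \mathbf{Cont}_{0,0}\to\mathbf{Cont}_{0,0}$; that is, $(-)\times\mathrm{Id} \dashv \partial$.
   Context: We work in Homotopy Type Theory (univalent universe $\mathsf{Type}$, function extensionality). A point $a:A$ is isolated if $a=b$ is decidable for every $b:A$; $A^{\circ}:=\sum_{a:A}\prod_{b:A}\mathrm{Dec}(a=b)$ denotes the subtype of isolated points, and for $a_0:A$, $A\setminus a_0 := \sum_{a:A} \neg(a_0=a)$. A container $(S\triangleleft P)$ consists of a type $S$ of shapes and a family $P:S\to\mathsf{Type}$ of positions; it is set-truncated if $S$ and every $P_s$ are sets. A cartesian morphism $(S\triangleleft P)\multimap(T\triangleleft Q)$ is a pair $(f,u)$ with $f:S\to T$ and $u:\prod_{s:S} Q_{f s}\simeq P_s$; composition is $(g,v)\circ(f,u)=(g\circ f,\ \lambda s.\,u_s\circ v_{f s})$. The identity container is $\mathrm{Id}:=(1\triangleleft \lambda\_.\,1)$, and the product is $(S\triangleleft P)\times(T\triangleleft Q):=(S\times T\triangleleft \lambda(s,t).\,P_s+Q_t)$; on morphisms, $(-)\times\mathrm{Id}$ sends $(f,u)$ to $(f\times\mathrm{id},\ \lambda s.\,u_s+\mathrm{id}_1)$. The derivative is $\partial(S\triangleleft P):=\big(\sum_{s:S}(P_s)^{\circ}\ \triangleleft\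 \lambda(s,p).\,P_s\setminus p\big)$; on a morphism $(f,u)$ it acts on shapes by $(s,p)\mapsto (f s, u_s^{-1}(p))$ (equivalences preserve isolated points) and on positions by the restriction of $u_s$ to an equivalence $Q_{fs}\setminus u_s^{-1}(p)\simeq P_s\setminus p$. *)

(* Defs.v *)
(* HoTT notions rendered set-level: equality of morphisms is Leibniz. *)
From Stdlib Require Import ProofIrrelevance.
Set Implicit Arguments.

Definition isSet (A : Type) : Prop := forall (x y : A) (p q : x = y), p = q.

Definition Dec (A : Type) : Type := (A + (A -> False))%type.

(* Equivalences (for sets, quasi-inverse data is a proposition) *)
Record Equiv (A B : Type) := {
  eqv :> A -> B;
  eqv_inv : B -> A;
  eqv_sect : forall a, eqv_inv (eqv a) = a;
  eqv_retr : forall b, eqv (eqv_inv b) = b }.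

Definition equiv_id (A : Type) : Equiv A A :=
  {| eqv := fun a => a; eqv_inv := fun a => a;
     eqv_sect := fun a => eq_refl; eqv_retr := fun a => eq_refl |}.

Definition equiv_comp (A B C : Type) (e1 : Equiv A B) (e2 : Equiv B C) : Equiv A C.
Proof.
  refine {| eqv := fun a => e2 (e1 a); eqv_inv := fun c => eqv_inv e1 (eqv_inv e2 c) |}.
  - intro a; rewrite eqv_sect, eqv_sect; reflexivity.
  - intro c; rewrite eqv_retr, eqv_retr; reflexivity.
Defined.

Definition equiv_sum (A B C D : Type) (e1 : Equiv A B) (e2 : Equiv C D) :
  Equiv (A + C) (B + D).
Proof.
  refine {| eqv := fun x => match x with inl a => inl (e1 a) | inr c => inr (e2 c) end;
            eqv_inv := fun y => match y with inl b => inl (eqv_inv e1 b)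
                                         | inr d => inr (eqv_inv e2 d) end |}.
  - intros [a|c]; rewrite eqv_sect; reflexivity.
  - intros [b|d]; rewrite eqv_retr; reflexivity.
Defined.

Definition Isolated (A : Type) : Type := {a : A & forall b : A, Dec (a = b)}.
Definition Minus (A : Type) (a0 : A) : Type := {a : A & ~ (a0 = a)}.

Record Cont := { Sh : Type; Pos : Sh -> Type }.

Definition isSetCont (F : Cont) : Prop :=
  isSet (Sh F) /\ forall s, isSet (Pos F s).

Record CMor (F G : Cont) := {
  shp : Sh F -> Sh G;
  pos : forall s : Sh F, Equiv (Pos G (shp s)) (Pos F s) }.

Definition cm_id (F : Cont) : CMor F F :=
  {| shp := fun s => s; pos := fun s => equiv_id (Pos F s) |}.

Definition cm_comp (F G H : Cont) (g : CMor G H) (f : CMor F G) : CMor F H :=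
  {| shp := fun s => shp g (shp f s);
     pos := fun s => equiv_comp (pos g (shp f s)) (pos f s) |}.

Definition IdC : Cont := {| Sh := unit; Pos := fun _ => unit |}.

Definition cprod (F G : Cont) : Cont :=
  {| Sh := (Sh F * Sh G)%type;
     Pos := fun st => (Pos F (fst st) + Pos G (snd st))%type |}.

Definition prodId (F : Cont) : Cont := cprod F IdC.

Definition prodId_mor (F G : Cont) (m : CMor F G) : CMor (prodId F) (prodId G) :=
  {| shp := fun st : Sh (prodId F) => (shp m (fst st), snd st) : Sh (prodId G);
     pos := fun st => equiv_sum (pos m (fst st)) (equiv_id unit) |}.

Definition deriv (F : Cont) : Cont :=
  {| Sh := {s : Sh F & Isolated (Pos F s)};
     Pos := fun sp => Minus (projT1 (projT2 sp)) |}.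

Definition isolated_inv (A B : Type) (e : Equiv A B) (p : Isolated B) : Isolated A.
Proof.
  exists (eqv_inv e (projT1 p)).
  intro b. destruct (projT2 p (e b)) as [h|h].
  - left. rewrite h, eqv_sect. reflexivity.
  - right. intro h'. apply h. rewrite <- h', eqv_retr. reflexivity.
Defined.

Lemma Minus_eq (A : Type) (a0 : A) (x y : Minus a0) : projT1 x = projT1 y -> x = y.
Proof.
  destruct x as [x hx], y as [y hy]; simpl; intro E; subst y.
  rewrite (proof_irrelevance _ hx hy). reflexivity.
Qed.

Definition minus_equiv (A B : Type) (e : Equiv A B) (p : B) :
  Equiv (Minus (eqv_inv e p)) (Minus p).
Proof.
  unshelve refine {| eqv := fun x => existT _ (e (projT1 x)) _;
                     eqv_inv := fun y => existT _ (eqv_inv e (projT1 y)) _ |}.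
  - intro h. apply (projT2 x). pose proof (f_equal (eqv_inv e) h) as h2.
    rewrite eqv_sect in h2. exact h2.
  - intro h. apply (projT2 y).
    pose proof (f_equal e h) as h2. rewrite !eqv_retr in h2. exact h2.
  - intro x. apply Minus_eq. simpl. apply eqv_sect.
  - intro y. apply Minus_eq. simpl. apply eqv_retr.
Defined.

Definition deriv_mor (F G : Cont) (m : CMor F G) : CMor (deriv F) (deriv G) :=
  {| shp := fun sp : Sh (deriv F) =>
       existT (fun t => Isolated (Pos G t)) (shp m (projT1 sp))
              (isolated_inv (pos m (projT1 sp)) (projT2 sp)) : Sh (deriv G);
     pos := fun sp => minus_equiv (pos m (projT1 sp)) (projT1 (projT2 sp)) |}.

(* Main.v *)
Require Import Defs.
From Stdlib Require Import ProofIrrelevance FunctionalExtensionality.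
Set Implicit Arguments.

Lemma Equiv_eq (A B : Type) (e1 e2 : Equiv A B) :
  (forall a, e1 a = e2 a) -> e1 = e2.
Proof.
  intro H.
  assert (Hi : forall b, eqv_inv e1 b = eqv_inv e2 b).
  { intro b. rewrite <- (eqv_sect e2 (eqv_inv e1 b)), <- H, eqv_retr. reflexivity. }
  destruct e1 as [f1 g1 s1 r1], e2 as [f2 g2 s2 r2]; simpl in *.
  assert (f1 = f2) by (apply functional_extensionality; exact H). subst f2.
  assert (g1 = g2) by (apply functional_extensionality; exact Hi). subst g2.
  rewrite (proof_irrelevance _ s1 s2), (proof_irrelevance _ r1 r2). reflexivity.
Qed.

Lemma Isolated_eq (A : Type) (i j : Isolated A) : projT1 i = projT1 j -> i = j.
Proof.
  destruct i as [a da], j as [b db]; simpl; intro E; subst b.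
  f_equal. apply functional_extensionality_dep; intro c.
  destruct (da c) as [h1|h1], (db c) as [h2|h2].
  - rewrite (proof_irrelevance _ h1 h2); reflexivity.
  - contradiction.
  - contradiction.
  - f_equal. apply functional_extensionality; intro x; contradiction.
Qed.

Lemma CMor_eq (F G : Cont) (f g : CMor F G) :
  (forall s, exists E : shp f s = shp g s,
     forall b : Pos G (shp g s),
       pos f s (eq_rect _ (Pos G) b _ (eq_sym E)) = pos g s b) -> f = g.
Proof.
  intro H.
  assert (Hs : forall s, shp f s = shp g s) by (intro s; destruct (H s) as [E _]; exact E).
  destruct f as [fs fp], g as [gs gp]; simpl in *.
  assert (fs = gs) by (apply functional_extensionality; exact Hs). subst gs.
  f_equal. apply functional_extensionality_dep; intro s.
  apply Equiv_eq; intro b. destruct (H s) as [E HE].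
  rewrite <- HE. rewrite (proof_irrelevance _ E eq_refl). reflexivity.
Qed.

Lemma dtrans (G : Cont) (t : Sh G) (i j : Isolated (Pos G t)) (Eij : i = j)
  (b : Minus (projT1 j)) :
  projT1 (eq_rect (existT (fun t => Isolated (Pos G t)) t j) (Pos (deriv G)) b
           (existT _ t i) (eq_sym (f_equal (existT (fun t => Isolated (Pos G t)) t) Eij)))
  = projT1 b.
Proof. destruct Eij; reflexivity. Qed.

Definition unl {B : Type} (y : B + unit) : y <> inr tt -> B :=
  match y with
  | inl a => fun _ => a
  | inr u => fun H => False_rect _ (H (match u with tt => eq_refl end))
  end.
Arguments unl {B} y H.

Lemma unl_eq (B : Type) (y : B + unit) (a : B) (H : y <> inr tt) :
  y = inl a -> unl y H = a.
Proof. intro E; subst; reflexivity. Qed.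

Lemma inl_unl (B : Type) (y : B + unit) (H : y <> inr tt) : inl (unl y H) = y.
Proof. destruct y as [a|[]]; [reflexivity | exfalso; apply H; reflexivity]. Qed.

Lemma unl_pi (B : Type) (y1 y2 : B + unit) (H1 : y1 <> inr tt) (H2 : y2 <> inr tt) :
  y1 = y2 -> unl y1 H1 = unl y2 H2.
Proof. intro E; subst; rewrite (proof_irrelevance _ H1 H2); reflexivity. Qed.

Definition inr_iso (B : Type) : Isolated (B + unit).
Proof.
  exists (inr tt). intros [a|[]].
  - right; discriminate.
  - left; reflexivity.
Defined.

Definition phi_pos (A B : Type) (e : Equiv A (B + unit)) :
  Equiv (Minus (eqv_inv e (inr tt))) B.
Proof.
  unshelve refine {| eqv := fun x => unl (e (projT1 x)) _;
                     eqv_inv := fun a => existT _ (eqv_inv e (inl a)) _ |}.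
  - intro h. apply (projT2 x). pose proof (f_equal (eqv_inv e) h) as h2.
    rewrite eqv_sect in h2. symmetry; exact h2.
  - intro h. pose proof (f_equal e h) as h2. rewrite !eqv_retr in h2. discriminate.
  - intro x. apply Minus_eq. simpl. rewrite inl_unl, eqv_sect. reflexivity.
  - intro a. simpl. apply unl_eq. apply eqv_retr.
Defined.

Definition psi_pos (A B : Type) (i : Isolated A) (e : Equiv (Minus (projT1 i)) B) :
  Equiv A (B + unit).
Proof.
  refine {| eqv := fun b => match projT2 i b with
                            | inl _ => inr tt
                            | inr n => inl (e (existT _ b n)) end;
            eqv_inv := fun y => match y with
                                | inl a => projT1 (eqv_inv e a)
                                | inr _ => projT1 i end |}.
  - intro b. destruct (projT2 i b) as [h|n].
    + exact h.
    + rewrite eqv_sect. reflexivity.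
  - intros [a|[]].
    + destruct (projT2 i (projT1 (eqv_inv e a))) as [h|n].
      * exfalso. exact (projT2 (eqv_inv e a) h).
      * f_equal. transitivity (e (eqv_inv e a)); [f_equal; apply Minus_eq; reflexivity | apply eqv_retr].
    + destruct (projT2 i (projT1 i)) as [h|n].
      * reflexivity.
      * exfalso; apply n; reflexivity.
Defined.

Definition phi (F G : Cont) (h : CMor (prodId F) G) : CMor F (deriv G) :=
  {| shp := fun s : Sh F =>
       existT (fun t => Isolated (Pos G t)) (shp h (s, tt))
              (isolated_inv (pos h (s, tt)) (inr_iso (Pos F s))) : Sh (deriv G);
     pos := fun s => phi_pos (pos h (s, tt)) |}.

Definition psi (F G : Cont) (k : CMor F (deriv G)) : CMor (prodId F) G :=
  {| shp := fun st : Sh (prodId F) => projT1 (shp k (fst st));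
     pos := fun st => psi_pos (projT2 (shp k (fst st))) (pos k (fst st)) |}.

Lemma phi_psi (F G : Cont) (k : CMor F (deriv G)) : phi (psi k) = k.
Proof.
  apply CMor_eq; intro s. destruct k as [ks kp]; simpl.
  generalize (kp s) as e. destruct (ks s) as [t [p dec]]. simpl. intro e.
  unshelve eexists.
  { apply (f_equal (existT (fun t => Isolated (Pos G t)) t)). apply Isolated_eq. reflexivity. }
  intro b.
  match goal with |- context [eq_rect ?x ?P b ?y ?E] => set (X := eq_rect x P b y E) end.
  assert (HX : projT1 X = projT1 b) by apply dtrans.
  clearbody X. destruct X as [x nx]; simpl in HX; subst x.
  destruct b as [b nb]. simpl.
  apply unl_eq. destruct (dec b) as [h|n]; [contradiction|].
  f_equal. f_equal. apply Minus_eq. reflexivity.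
Qed.

Lemma psi_phi_pos (A B : Type) (e : Equiv A (B + unit)) (b : A) :
  psi_pos (isolated_inv e (inr_iso B)) (phi_pos e) b = e b.
Proof.
  unfold psi_pos; simpl.
  lazymatch goal with |- match ?d with _ => _ end = _ => destruct d as [h|n] end.
  - rewrite <- h, eqv_retr. reflexivity.
  - apply inl_unl.
Qed.

Lemma psi_phi (F G : Cont) (h : CMor (prodId F) G) : psi (phi h) = h.
Proof.
  apply CMor_eq; intros [s []]. exists eq_refl. intro b. simpl.
  apply psi_phi_pos.
Qed.

Lemma sum_unl (B C : Type) (f : Equiv B C) (y : B + unit) (H : y <> inr tt) :
  equiv_sum f (equiv_id unit) y = inl (f (unl y H)).
Proof. destruct y as [c|[]]; [reflexivity | exfalso; apply H; reflexivity]. Qed.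

Ltac xtrick b :=
  let X := fresh "X" in
  match goal with |- context [eq_rect ?x ?P b ?y ?E] => set (X := eq_rect x P b y E) end;
  let HX := fresh "HX" in
  assert (HX : projT1 X = projT1 b) by apply dtrans;
  clearbody X; let x := fresh "x" in let nx := fresh "nx" in
  destruct X as [x nx]; simpl in HX; subst x.

Ltac dshape :=
  unshelve eexists;
  [ simpl; apply (f_equal (existT _ _)); apply Isolated_eq; reflexivity | ].

Theorem theorem3p11 :
  (* both constructions stay in Cont_{0,0} *)
  (forall F : Cont, isSetCont F -> isSetCont (prodId F)) /\
  (forall F : Cont, isSetCont F -> isSetCont (deriv F)) /\
  (* functoriality *)
  (forall F : Cont, isSetCont F -> prodId_mor (cm_id F) = cm_id (prodId F)) /\
  (forall F : Cont, isSetCont F -> deriv_mor (cm_id F) = cm_id (deriv F)) /\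
  (forall (F G H : Cont), isSetCont F -> isSetCont G -> isSetCont H ->
     forall (g : CMor G H) (f : CMor F G),
       prodId_mor (cm_comp g f) = cm_comp (prodId_mor g) (prodId_mor f)) /\
  (forall (F G H : Cont), isSetCont F -> isSetCont G -> isSetCont H ->
     forall (g : CMor G H) (f : CMor F G),
       deriv_mor (cm_comp g f) = cm_comp (deriv_mor g) (deriv_mor f)) /\
  (* the adjunction (-) x Id -| partial *)
  exists (phi : forall F G : Cont, CMor (prodId F) G -> CMor F (deriv G))
         (psi : forall F G : Cont, CMor F (deriv G) -> CMor (prodId F) G),
    (forall F G : Cont, isSetCont F -> isSetCont G ->
       (forall h : CMor (prodId F) G, psi F G (phi F G h) = h) /\
       (forall k : CMor F (deriv G), phi F G (psi F G k) = k)) /\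
    (forall F F' G G' : Cont,
       isSetCont F -> isSetCont F' -> isSetCont G -> isSetCont G' ->
       forall (a : CMor F' F) (b : CMor G G') (h : CMor (prodId F) G),
         phi F' G' (cm_comp b (cm_comp h (prodId_mor a)))
         = cm_comp (deriv_mor b) (cm_comp (phi F G h) a)).
Proof.
  split; [intros F _; split; intros; intros ? ? ? ?; apply proof_irrelevance|].
  split; [intros F _; split; intros; intros ? ? ? ?; apply proof_irrelevance|].
  split.
  { intros F _. apply CMor_eq; intros [s u]; exists eq_refl; intros [a|[]]; reflexivity. }
  split.
  { intros F _. apply CMor_eq; intros [t i]. dshape. intro b. xtrick b.
    apply Minus_eq. simpl. reflexivity. }
  split.
  { intros F G H _ _ _ g f. apply CMor_eq; intros [s u]; exists eq_refl; intros [a|[]]; reflexivity. }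
  split.
  { intros F G H _ _ _ g f. apply CMor_eq; intros [t i]. dshape. intro b. xtrick b.
    apply Minus_eq. simpl. reflexivity. }
  exists phi, psi. split.
  { intros F G _ _. split; [apply psi_phi | apply phi_psi]. }
  intros F F' G G' _ _ _ _ a b h. apply CMor_eq; intro s. dshape. intro c. xtrick c.
  destruct c as [c nc]. simpl in *. subst. simpl.
  apply unl_eq. apply sum_unl.
Qed.
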